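(* For every $\bar\alpha\in V$ and every positive integer $L$, $\bar M(\bar\alpha)\le\bar M(\bar\alpha^L)$.
   Context: For a non-zero algebraic number $\gamma$ with minimal polynomial $A\prod_{n=1}^N(x-\gamma_n)$ over $\mathbb Z$ (primitive, $A>0$), $M(\gamma)=A\prod_{n=1}^N\max\{1,|\gamma_n|\}$. $V=\overline{\mathbb Q}^\times/\mathrm{Tor}(\overline{\mathbb Q}^\times)$ with quotient map $\pi$. $\bar M(\beta)=\inf\{M(\zeta\beta):\zeta\text{ a root of unity}\}$, which is well-defined on $V$; for $\bar\beta\in V$, $\bar M(\bar\beta)=\inf\{M(\beta):\beta\in\pi^{-1}(\bar\beta)\}$. *)

(* Defs.v *)
(* algebraic numbers are modelled by algC. *)
From HB Require Import structures.
From mathcomp Require Import all_boot all_order all_algebra all_field.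
From Stdlib Require Import ClassicalEpsilon.
Set Implicit Arguments. Unset Strict Implicit. Unset Printing Implicit Defensive.
Import Order.TTheory GRing.Theory Num.Theory.
Local Open Scope ring_scope.

(* p is the minimal polynomial of gamma over Z: nonzero, gamma is a root,
   of minimal degree among nonzero integer polynomials vanishing at gamma,
   primitive with positive leading coefficient (zcontents p = 1 means
   gcd of coefficients is 1 and the sign of the leading coefficient is +). *)
Definition is_minpolyZ (gamma : algC) (p : {poly int}) : Prop :=
  [/\ p != 0, root (map_poly intr p) gamma, zcontents p = 1
    & forall q : {poly int}, q != 0 -> root (map_poly intr q) gamma ->
        (size p <= size q)%N].

Definition minpolyZ (gamma : algC) : {poly int} :=
  epsilon (inhabits 0) (is_minpolyZ gamma).

Definition rootsZ (p : {poly int}) : seq algC :=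
  sval (closed_field_poly_normal (map_poly intr p : {poly algC})).

Definition mahlerZ (p : {poly int}) : algC :=
  (lead_coef p)%:~R * \prod_(z <- rootsZ p) Num.max 1 `|z|.

Definition M (gamma : algC) : algC := mahlerZ (minpolyZ gamma).

Definition root_of_unity (z : algC) : Prop :=
  exists n : nat, (0 < n)%N /\ z ^+ n = 1.

(* Mbar(a) <= Mbar(b), where Mbar(x) = inf { M(zeta x) : zeta root of unity },
   written out via the definition of infimum (the inf is of a set of reals
   bounded below by 1):  every M(zeta' b) is >= inf_zeta M(zeta a). *)
Definition Mbar_le (a b : algC) : Prop :=
  forall zeta', root_of_unity zeta' ->
  forall eps : algC, 0 < eps ->
  exists zeta, root_of_unity zeta /\ M (zeta * a) < M (zeta' * b) + eps.

(* Main.v *)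
Require Import Defs.
From HB Require Import structures.
From mathcomp Require Import all_boot all_order all_algebra all_field.
From mathcomp Require Import ring.
From Stdlib Require Import Classical ClassicalEpsilon.
Import Order.TTheory GRing.Theory Num.Theory.
Local Open Scope ring_scope.

Definition fm (z : algC) : algC := Num.max 1 `|z|.

Lemma fm_ge1 z : 1 <= fm z.
Proof. rewrite /fm /Num.max; case: ifP => // /ltW //. Qed.

Lemma fm_ge0 z : 0 <= fm z.
Proof. exact: le_trans ler01 (fm_ge1 z). Qed.

Lemma prod_fm_ge1 (s : seq algC) : 1 <= \prod_(z <- s) fm z.
Proof.
elim: s => [|z s IH]; rewrite ?big_nil ?big_cons //.
by rewrite (le_trans IH) // ler_peMl ?fm_ge1 // (le_trans ler01 IH).
Qed.

Lemma lead_map_intr (p : {poly int}) :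
  lead_coef (map_poly intr p : {poly algC}) = (lead_coef p)%:~R.
Proof. by rewrite lead_coef_map_inj //; exact: intr_inj. Qed.

Lemma rootsZ_spec p : map_poly intr p =
   (lead_coef p)%:~R *: \prod_(z <- rootsZ p) ('X - z%:P) :> {poly algC}.
Proof.
rewrite /rootsZ; case: closed_field_poly_normal => r /= {1}->.
by rewrite lead_map_intr.
Qed.

Lemma rootsZ_perm (p : {poly int}) (c : algC) s : p != 0 ->
  map_poly intr p = c *: \prod_(z <- s) ('X - z%:P) -> perm_eq (rootsZ p) s.
Proof.
move=> p0 E.
have Hc : c = (lead_coef p)%:~R.
  by rewrite -lead_map_intr E lead_coefZ (monicP (monic_prod_XsubC _ _ _)) mulr1.
have c0 : c != 0 by rewrite Hc intr_eq0 lead_coef_eq0.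
apply: prod_XsubC_eq; apply: (scalerI c0).
by rewrite -E Hc -rootsZ_spec.
Qed.

Lemma mahlerZ_perm (p : {poly int}) (c : algC) s : p != 0 ->
  map_poly intr p = c *: \prod_(z <- s) ('X - z%:P) ->
  mahlerZ p = (lead_coef p)%:~R * \prod_(z <- s) fm z.
Proof.
move=> p0 E; rewrite /mahlerZ; congr (_ * _).
apply: perm_big; exact: (@rootsZ_perm p c s p0 E).
Qed.

Lemma mahlerZM (p q : {poly int}) : p != 0 -> q != 0 ->
  mahlerZ (p * q) = mahlerZ p * mahlerZ q.
Proof.
move=> p0 q0.
have pq0 : p * q != 0 by rewrite mulf_neq0.
rewrite (@mahlerZ_perm _ ((lead_coef p)%:~R * (lead_coef q)%:~R)
   (rootsZ p ++ rootsZ q)) //.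
  by rewrite /mahlerZ big_cat /= lead_coefM intrM; ring.
rewrite rmorphM /= (rootsZ_spec p) (rootsZ_spec q) big_cat /=.
by rewrite -scalerAl -scalerAr scalerA.
Qed.

Lemma mahlerZ_ge (p : {poly int}) : 0 <= lead_coef p ->
  (lead_coef p)%:~R <= mahlerZ p.
Proof.
move=> h; rewrite /mahlerZ -{1}[_%:~R]mulr1 ler_wpM2l ?prod_fm_ge1 //.
by rewrite ler0z.
Qed.
Lemma fmX z (L : nat) : (0 < L)%N -> fm z ^+ L = fm (z ^+ L).
Proof.
move=> L0; rewrite /fm /Num.max normrX expr_gt1 //.
by case: ifP => _; rewrite ?expr1n.
Qed.

Lemma prod_const_fm (r : seq algC) c :
  (forall z, z \in r -> fm z = c) -> \prod_(z <- r) fm z = c ^+ size r.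
Proof.
elim: r => [|a r IH] H; first by rewrite big_nil expr0.
rewrite big_cons IH ?H ?mem_head //= ?exprS // => z zr.
by apply: H; rewrite in_cons zr orbT.
Qed.

Definition rsL (L : nat) (d : algC) : seq algC :=
  sval (closed_field_poly_normal ('X^L - d%:P)).

Lemma rsL_spec L d : (0 < L)%N ->
  'X^L - d%:P = \prod_(z <- rsL L d) ('X - z%:P).
Proof.
move=> L0; rewrite /rsL; case: closed_field_poly_normal => r /= {1}->.
by rewrite (monicP (monicXnsubC _ L0)) scale1r.
Qed.

Lemma rsL_fm L d : (0 < L)%N -> \prod_(z <- rsL L d) fm z = fm d.
Proof.
move=> L0.
have E := @rsL_spec L d L0.
have sz : size (rsL L d) = L.
  have := congr1 (fun p : {poly algC} => size p) E; rewrite /= size_XnsubC // size_prod_XsubC; by case.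
rewrite (@prod_const_fm _ (L.-root (fm d))).
  by rewrite sz rootCK.
move=> z zr.
have : root ('X^L - d%:P) z by rewrite E root_prod_XsubC.
rewrite rootE !hornerE subr_eq0 => /eqP zL.
by rewrite -zL -fmX // exprCK // fm_ge0.
Qed.

Lemma mahlerZ_comp (q : {poly int}) (L : nat) : (0 < L)%N -> q != 0 ->
  mahlerZ (q \Po 'X^L) = mahlerZ q.
Proof.
move=> L0 q0.
have sX : (1 < size ('X^L : {poly int}))%N by rewrite size_polyXn ltnS.
have Q0 : q \Po 'X^L != 0.
  by rewrite -lead_coef_eq0 lead_coef_comp // lead_coefXn expr1n mulr1 lead_coef_eq0.
rewrite (@mahlerZ_perm _ (lead_coef q)%:~R
   (flatten (map (rsL L) (rootsZ q)))) //.
  rewrite lead_coef_comp // lead_coefXn expr1n mulr1 /mahlerZ big_flatten big_map /=.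
  by congr (_ * _); apply: eq_bigr => d _; rewrite rsL_fm.
rewrite map_comp_poly map_polyXn rootsZ_spec comp_polyZ; congr (_ *: _).
rewrite big_flatten big_map /=.
elim: (rootsZ q) => [|d s IH]; first by rewrite !big_nil comp_polyC.
rewrite !big_cons comp_polyM IH -rsL_spec //.
by rewrite comp_polyB comp_polyX comp_polyC.
Qed.
Lemma exists_intpoly (g : algC) :
  exists q : {poly int}, q != 0 /\ root (map_poly intr q) g.
Proof.
have [p [Ep mp] Hr] := minCpolyP g.
have [q [a a0 Epq]] := rat_poly_scale p.
have q0 : q != 0.
  apply: contraTneq (monic_neq0 mp) => q0; rewrite Epq q0 rmorph0 scaler0 eqxx //.
exists q; split => //.
have := root_minCpoly g; rewrite Ep Epq.
rewrite linearZ /= -map_poly_comp rootE hornerZ mulf_eq0 => /orP[|].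
  by rewrite fmorphV rmorph_int invr_eq0 intr_eq0 (negbTE a0).
have -> : map_poly (ratr \o intr) q = map_poly intr q :> {poly algC}.
  by apply: eq_map_poly => x /=; rewrite rmorph_int.
by [].
Qed.
Lemma exists_min_root (g : algC) : exists p : {poly int},
  [/\ p != 0, root (map_poly intr p) g &
   forall q : {poly int}, q != 0 -> root (map_poly intr q) g -> (size p <= size q)%N].
Proof.
have [qq [qq0 rqq]] := exists_intpoly g.
suff H : forall n (q : {poly int}), (size q <= n)%N -> q != 0 ->
   root (map_poly intr q) g -> exists p : {poly int},
  [/\ p != 0, root (map_poly intr p) g &
   forall q : {poly int}, q != 0 -> root (map_poly intr q) g -> (size p <= size q)%N].
  exact: (H _ qq (leqnn _)).
elim=> [|n IH] q szq q0 rq.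
  by move: szq; rewrite leqn0 size_poly_eq0 (negbTE q0).
case: (Classical_Prop.classic (exists q' : {poly int},
   [/\ q' != 0, root (map_poly intr q') g & (size q' < size q)%N])).
  case=> q' [q'0 rq' lt]; apply: (IH q') => //.
  by rewrite -ltnS (leq_trans lt).
move=> nex; exists q; split => // q' q'0 rq'.
rewrite leqNgt; apply/negP => lt; apply: nex; exists q'; by split.
Qed.

Lemma exists_minpoly (g : algC) : exists p, is_minpolyZ g p.
Proof.
have [p [p0 rp minp]] := exists_min_root g.
exists (zprimitive p); split.
- by rewrite zprimitive_eq0.
- move: rp; rewrite {1}(zpolyEprim p) linearZ /= rootE hornerZ mulf_eq0.
  by rewrite intr_eq0 zcontents_eq0 (negbTE p0).
- by rewrite zcontents_primitive p0.
- by move=> q q0 rq; rewrite size_zprimitive minp.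
Qed.

Lemma minpolyZ_spec (g : algC) : is_minpolyZ g (minpolyZ g).
Proof.
rewrite /minpolyZ; case: (exists_minpoly g) => p Hp.
exact: ClassicalEpsilon.epsilon_spec (ex_intro _ p Hp).
Qed.
Lemma min_dvd (g : algC) (p Q : {poly int}) : is_minpolyZ g p -> Q != 0 ->
  root (map_poly intr Q) g -> exists s, Q = p * s.
Proof.
case=> p0 rp cp minp Q0 rQ.
have dv : p %| Q.
  rewrite /dvdp; apply/negPn/negP => r0.
  have E := Pdiv.Idomain.divp_eq Q p.
  have rr : root (map_poly intr (Q %% p)) g.
    move: (congr1 (fun P : {poly int} => (map_poly intr P : {poly algC}).[g]) E).
    rewrite /= !rmorphD !rmorphM /= linearZ /= !hornerE.
    move: rQ rp; rewrite !rootE => /eqP -> /eqP ->.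
    by rewrite !mulr0 add0r => <-.
  have := minp _ r0 rr; rewrite leqNgt Pdiv.Idomain.ltn_modpN0 //.
have [s Es] := dvdpP_int dv.
exists s; rewrite Es; congr (_ * _).
by rewrite {2}(zpolyEprim p) cp scale1r.
Qed.
Lemma lead_minpoly_gt0 (g : algC) : 0 < lead_coef (minpolyZ g).
Proof.
have [_ _ c _] := minpolyZ_spec g.
by rewrite -sgz_gt0 -sgz_contents c.
Qed.

Lemma key (g : algC) (L : nat) : (0 < L)%N -> M g <= M (g ^+ L).
Proof.
move=> L0; rewrite /M.
set p := minpolyZ g; set q := minpolyZ (g ^+ L).
have [q0 rq _ _] := minpolyZ_spec (g ^+ L).
have [p0 _ _ _] := minpolyZ_spec g.
have hp : 0 < lead_coef p := lead_minpoly_gt0 g.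
have hq : 0 < lead_coef q := lead_minpoly_gt0 (g ^+ L).
have sX : (1 < size ('X^L : {poly int}))%N by rewrite size_polyXn ltnS.
have lQ : lead_coef (q \Po 'X^L) = lead_coef q.
  by rewrite lead_coef_comp // lead_coefXn expr1n mulr1.
have Q0 : q \Po 'X^L != 0 by rewrite -lead_coef_eq0 lQ lead_coef_eq0.
have rQ : root (map_poly intr (q \Po 'X^L)) g.
  by rewrite map_comp_poly map_polyXn rootE horner_comp hornerXn.
have [s Es] := @min_dvd g p _ (minpolyZ_spec g) Q0 rQ.
have s0 : s != 0 by apply: contraTneq Q0 => s0; rewrite Es s0 mulr0 eqxx.
have hs : 0 < lead_coef s.
  by move: hq; rewrite -lQ Es lead_coefM pmulr_rgt0.
rewrite -(@mahlerZ_comp q L L0 q0) Es mahlerZM //.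
have m0 : 0 <= mahlerZ p.
  apply: (le_trans _ (@mahlerZ_ge p (ltW hp))); by rewrite ler0z ltW.
rewrite ler_peMr //; apply: (le_trans _ (@mahlerZ_ge s (ltW hs))).
by rewrite ler1z.
Qed.

Theorem mainTheorem5 (alpha : algC) (L : nat) :
  alpha != 0 -> (0 < L)%N -> Mbar_le alpha (alpha ^+ L).
Proof.
move=> a0 L0 z' [n [n0 zn]] eps eps0.
exists (L.-root z'); split.
  exists (L * n)%N; split; first by rewrite muln_gt0 L0.
  by rewrite exprM rootCK.
apply: (le_lt_trans (@key (L.-root z' * alpha) L L0)).
by rewrite exprMn rootCK // ltrDl.
Qed.
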